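(* In the mirror triangle method with stochastic $(\delta,L)$-oracle (see context), write $l_f^\delta(x;y)=f_\delta(y)+\langle\tilde\nabla^{m_{k+1}}f_\delta(y),x-y\rangle$. Then at every step $k+1$, for all $x\in Q$, $$l_f^\delta(x_{k+1};y_{k+1})+\frac{L_{k+1}}2\|x_{k+1}-y_{k+1}\|^2+h(x_{k+1})\le\frac{A_k}{A_{k+1}}\big(l_f^\delta(x_k;y_{k+1})+h(x_k)\big)+\frac{\alpha_{k+1}}{A_{k+1}}\Big(l_f^\delta(x;y_{k+1})+h(x)+\frac1{\alpha_{k+1}}V(x,u_k)-\frac1{\alpha_{k+1}}V(x,u_{k+1})\Big).$$
   Context: $\mathbb{R}^n$ carries the Euclidean norm; $Q$ closed convex, $D_Q\ge\max_{x,y\in Q}\|x-y\|$ finite; $f:Q\to\mathbb{R}$ convex with $L$-Lipschitz gradient; $h$ convex on $Q$. Prox-function $d$ ($C^1$, $1$-strongly convex), $V(x,y)=d(x)-d(y)-\langle\nabla d(y),x-y\rangle$. Stochastic $(\delta,L)$-oracle: for query $y\in Q$ returns $(f_\delta(y),\nabla f_\delta(y;\xi))$ such that for some vector $\nabla f_\delta(y)$: $0\le f(x)-f_\delta(y)-\langle\nabla f_\delta(y),x-y\rangle\le\frac L2\|x-y\|^2+\delta$ for all $x\in Q$; $\mathbb{E}\nabla f_\delta(y;\xi)=\nabla f_\delta(y)$; $\mathbb{E}\exp(\|\nabla f_\delta(y;\xi)-\nabla f_\delta(y)\|^2/D)\le e$ ($D>0$). Method with $x_0\in Q$, $\varepsilon>0$,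 $\beta\in(0,1)$: $N=\lceil2\sqrt3\sqrt LD_Q/\sqrt\varepsilon\rceil$, $\Omega=\sqrt{2\ln(N/\beta)}$, $\tilde\Omega=1+2\Omega+\Omega^2$; $y_0=u_0=x_0$, $L_1=L/2$, $\alpha_0=A_0=0$. Step $k+1$ with current $L_{k+1}$: (i) $\alpha_{k+1}$ largest root of $A_k+\alpha=L_{k+1}\alpha^2$, $A_{k+1}=A_k+\alpha_{k+1}$; (ii) $y_{k+1}=(\alpha_{k+1}u_k+A_kx_k)/A_{k+1}$; (iii) $m_{k+1}=\lceil3D\tilde\Omega\alpha_{k+1}/\varepsilon\rceil$, query the oracle $m_{k+1}$ times independently at $y_{k+1}$, $\tilde\nabla^{m_{k+1}}f_\delta(y_{k+1})=\frac1{m_{k+1}}\sum_j\nabla f_\delta(y_{k+1};\xi_j)$; (iv) $u_{k+1}=\arg\min_{x\in Q}\{V(x,u_k)+\alpha_{k+1}(f_\delta(y_{k+1})+\langle\tilde\nabla^{m_{k+1}}f_\delta(y_{k+1}),x-y_{k+1}\rangle+h(x))\}$; (v) $x_{k+1}=(\alpha_{k+1}u_{k+1}+A_kx_k)/A_{k+1}$; (vi) if $f_\delta(x_{k+1})\le f_\delta(y_{k+1})+\langle\tilde\nabla^{m_{k+1}}f_\delta(y_{k+1}),x_{k+1}-y_{k+1}\rangle+\frac{L_{k+1}}2\|x_{k+1}-y_{k+1}\|^2+\frac{3D\tilde\Omega}{L_{k+1}m_{k+1}}+\delta$, set $L_{k+2}=L_{k+1}/2$ and go on; otherwise replace $L_{k+1}$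 by $2L_{k+1}$ and repeat step $k+1$. *)

(* Defs.v *)
(* R^n is represented by row vectors 'rV[R]_n,
   equipped explicitly with the Euclidean inner product and norm
   (MathComp's own norm on matrices is the max-norm, which is NOT used). *)
From HB Require Import structures.
From mathcomp Require Import all_boot all_order all_algebra.
From mathcomp Require Import all_classical all_reals all_analysis.
Set Implicit Arguments. Unset Strict Implicit. Unset Printing Implicit Defensive.
Import Order.TTheory GRing.Theory Num.Theory.
Import numFieldNormedType.Exports.
Local Open Scope classical_set_scope.
Local Open Scope ring_scope.

Section Defs.
Context {R : realType} {n : nat}.
Local Notation vec := 'rV[R]_n.

Definition dotp (x y : vec) : R := \sum_(i < n) x ord0 i * y ord0 i.
Definition sqnorm (x : vec) : R := dotp x x.
Definition enorm (x : vec) : R := Num.sqrt (sqnorm x).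

Definition is_convex_set (Q : set vec) : Prop :=
  forall a b (t : R), Q a -> Q b -> 0 <= t <= 1 -> Q (t *: a + (1 - t) *: b).

Definition convex_fun_on (Q : set vec) (h : vec -> R) : Prop :=
  forall a b (t : R), Q a -> Q b -> 0 <= t <= 1 ->
    h (t *: a + (1 - t) *: b) <= t * h a + (1 - t) * h b.

Definition C1_with_gradient (d : vec -> R) (gd : vec -> vec) : Prop :=
  (forall y, differentiable d y /\ forall v, 'd d y v = dotp (gd y) v)
  /\ continuous gd.

Definition strongly_convex1_on (Q : set vec) (d : vec -> R) (gd : vec -> vec) : Prop :=
  forall a b, Q a -> Q b -> d b + dotp (gd b) (a - b) + 2^-1 * sqnorm (a - b) <= d a.

Definition bregman (d : vec -> R) (gd : vec -> vec) (a b : vec) : R :=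
  d a - d b - dotp (gd b) (a - b).

(* l_f^delta(x; y) = f_delta(y) + <g, x - y>, g the averaged stochastic gradient at y *)
Definition lfd (fdelta : vec -> R) (g y a : vec) : R := fdelta y + dotp g (a - y).

End Defs.

(* Main.v *)
From HB Require Import structures.
From mathcomp Require Import all_boot all_order all_algebra.
From mathcomp Require Import all_classical all_reals all_analysis.
From mathcomp Require Import ring lra.
Require Import Defs.
Import Order.TTheory GRing.Theory Num.Theory.
Import numFieldNormedType.Exports.
Local Open Scope classical_set_scope.
Local Open Scope ring_scope.

Lemma lim_pos_ge (R : realType) (q : R -> R) (D c : R) :
  q @ 0^' --> D -> (forall h, 0 < h <= 1 -> c <= q h) -> c <= D.
Proof.
move=> qD H; rewrite leNgt; apply/negP => Dc.
have H2 : \forall t \near 0^', q t < c by exact: (cvgr_lt _ qD).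
move: H2; rewrite /dnbhs /within /= => /nbhs_ballP [e /= e0 He].
pose t := Num.min (e / 2) 1.
have t0 : 0 < t by rewrite lt_min ltr01 andbT divr_gt0.
have t1 : t <= 1 by rewrite ge_min lexx orbT.
have := He t.
have bt : ball 0 e t.
  rewrite /ball /= sub0r normrN gtr0_norm //.
  apply: (le_lt_trans (y := e / 2)); first by rewrite ge_min lexx.
  by rewrite ltr_pdivrMr // ltr_pMr // ltr1n.
move=> /(_ bt (lt0r_neq0 t0)).
by rewrite ltNge (H t) // t0 t1.
Qed.
Lemma dirder (R : realType) (n : nat) (d : 'rV[R]_n -> R) gd a v c :
  C1_with_gradient d gd ->
  (forall t, 0 < t <= 1 -> c <= t^-1 * (d (t *: v + a) - d a)) ->
  c <= dotp (gd a) v.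
Proof.
move=> [Hd _] H.
have [dd dv] := Hd a.
rewrite -dv -deriveE //.
apply: (@lim_pos_ge _ (fun h => h^-1 *: ((d \o shift a) (h *: v) - d a))).
  have := @diff_derivable _ _ _ d a v dd. by rewrite /derive.
by move=> t /H; rewrite /= addrC.
Qed.

Section Dot.
Variables (R : realType) (n : nat).
Implicit Types (p q w : 'rV[R]_n).
Lemma dotpDr p q w : dotp p (q + w) = dotp p q + dotp p w.
Proof. by rewrite /dotp -big_split /=; apply: eq_bigr => i _; rewrite mxE mulrDr. Qed.
Lemma dotpZr p q (t : R) : dotp p (t *: q) = t * dotp p q.
Proof. by rewrite /dotp mulr_sumr; apply: eq_bigr => i _; rewrite mxE mulrCA. Qed.
Lemma dotpZl p q (t : R) : dotp (t *: p) q = t * dotp p q.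
Proof. by rewrite /dotp mulr_sumr; apply: eq_bigr => i _; rewrite mxE mulrA. Qed.
Lemma dotpNr p q : dotp p (- q) = - dotp p q.
Proof. by rewrite -scaleN1r dotpZr mulN1r. Qed.
Lemma dotpBr p q w : dotp p (q - w) = dotp p q - dotp p w.
Proof. by rewrite dotpDr dotpNr. Qed.
Lemma sqnormZ p (t : R) : sqnorm (t *: p) = t ^+ 2 * sqnorm p.
Proof. by rewrite /sqnorm dotpZl dotpZr mulrA expr2. Qed.
End Dot.

Lemma lfd_comb (R : realType) (n : nat) (f : 'rV[R]_n -> R) G y p q (t : R) :
  lfd f G y (t *: p + (1 - t) *: q) = t * lfd f G y p + (1 - t) * lfd f G y q.
Proof. rewrite /lfd !dotpBr !dotpDr !dotpZr. ring. Qed.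

Lemma diffcomb (R : realType) (n : nat) (c a b : R) (p q r : 'rV[R]_n) :
  c^-1 *: (a *: p + b *: r) - c^-1 *: (a *: q + b *: r) = (a / c) *: (p - q).
Proof.
by rewrite -scalerBr opprD addrACA subrr addr0 -scalerBr scalerA mulrC.
Qed.
Theorem lemma7 (R : realType) (n : nat)
  (Q : set 'rV[R]_n) (DQ : R) (h d : 'rV[R]_n -> R) (gd : 'rV[R]_n -> 'rV[R]_n)
  (fdelta : 'rV[R]_n -> R) (L : R) (x0 : 'rV[R]_n)
  (Ls A alpha : nat -> R) (x y u g : nat -> 'rV[R]_n) :
  closed Q -> is_convex_set Q ->
  (forall a b, Q a -> Q b -> enorm (a - b) <= DQ) ->
  convex_fun_on Q h ->
  C1_with_gradient d gd -> strongly_convex1_on Q d gd ->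
  0 < L -> Q x0 ->
  (* initialisation *)
  y 0%N = x0 -> u 0%N = x0 -> x 0%N = x0 -> Ls 1%N = L / 2 -> alpha 0%N = 0 -> A 0%N = 0 ->
  (* backtracking: the accepted L_{k+2} is L_{k+1}/2 doubled j times *)
  (forall k, exists j : nat, Ls k.+2 = Ls k.+1 / 2 * 2 ^+ j) ->
  (* (i) alpha_{k+1} largest root of A_k + a = L_{k+1} a^2 ; A_{k+1} = A_k + alpha_{k+1} *)
  (forall k, A k + alpha k.+1 = Ls k.+1 * alpha k.+1 ^+ 2 /\
             (forall b, A k + b = Ls k.+1 * b ^+ 2 -> b <= alpha k.+1)) ->
  (forall k, A k.+1 = A k + alpha k.+1) ->
  (* (ii) *)
  (forall k, y k.+1 = (A k.+1)^-1 *: (alpha k.+1 *: u k + A k *: x k)) ->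
  (* (iv) with g k.+1 the realised averaged stochastic gradient at y k.+1 *)
  (forall k, Q (u k.+1) /\
     forall z, Q z ->
       bregman d gd (u k.+1) (u k)
         + alpha k.+1 * (lfd fdelta (g k.+1) (y k.+1) (u k.+1) + h (u k.+1))
       <= bregman d gd z (u k)
         + alpha k.+1 * (lfd fdelta (g k.+1) (y k.+1) z + h z)) ->
  (* (v) *)
  (forall k, x k.+1 = (A k.+1)^-1 *: (alpha k.+1 *: u k.+1 + A k *: x k)) ->
  forall (k : nat) (z : 'rV[R]_n), Q z ->
    lfd fdelta (g k.+1) (y k.+1) (x k.+1) + Ls k.+1 / 2 * sqnorm (x k.+1 - y k.+1)
      + h (x k.+1)
    <= A k / A k.+1 * (lfd fdelta (g k.+1) (y k.+1) (x k) + h (x k))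
       + alpha k.+1 / A k.+1 *
         (lfd fdelta (g k.+1) (y k.+1) z + h z
          + (alpha k.+1)^-1 * bregman d gd z (u k)
          - (alpha k.+1)^-1 * bregman d gd z (u k.+1)).
Proof.
move=> _ Qconv _ hconv dC1 dsc L0 Qx0 _ u0 xx0 Ls1 _ A0 HLs Halpha HA Hy Hu Hx.
have Lspos : forall k, 0 < Ls k.+1.
  elim=> [|k IH]; first by rewrite Ls1 divr_gt0.
  have [j ->] := HLs k.
  by rewrite mulr_gt0 ?divr_gt0 // exprn_gt0.
have apos : forall k, 0 < alpha k.+1.
  move=> k; have [E M] := Halpha k; have Lk := Lspos k.
  have : A k + ((Ls k.+1)^-1 - alpha k.+1) = Ls k.+1 * ((Ls k.+1)^-1 - alpha k.+1) ^+ 2.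
    have eA : A k = Ls k.+1 * alpha k.+1 ^+ 2 - alpha k.+1 by rewrite -E addrK.
    rewrite eA; field; exact: lt0r_neq0.
  move=> /M H.
  have iL : 0 < (Ls k.+1)^-1 by rewrite invr_gt0.
  lra.
have Apos : forall k, 0 <= A k.
  elim=> [|k IH]; first by rewrite A0.
  by rewrite HA; have := apos k; lra.
have A1pos : forall k, 0 < A k.+1 by move=> k; rewrite HA; have := apos k; have := Apos k; lra.
have xcomb : forall k, x k.+1 = (alpha k.+1 / A k.+1) *: u k.+1 + (1 - alpha k.+1 / A k.+1) *: x k.
  move=> k; rewrite Hx scalerDr !scalerA; congr (_ *: _ + _ *: _); first by rewrite mulrC.
  have := A1pos k; rewrite HA => P. field; lra.
have tin : forall k, 0 <= alpha k.+1 / A k.+1 <= 1.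
  move=> k; apply/andP; split; first by rewrite divr_ge0 // ltW // apos.
  by rewrite ler_pdivrMr // mul1r HA; have := Apos k; lra.
have Qu : forall k, Q (u k) by case=> [|k]; [rewrite u0 | case: (Hu k)].
have Qx : forall k, Q (x k).
  elim=> [|k IH]; first by rewrite xx0.
  by rewrite xcomb; apply: Qconv => //; apply: Qu.
move=> k z Qz.
set a := alpha k.+1; set A1 := A k.+1; set Ak := A k; set up := u k.+1; set uk := u k.
set xk := x k; set yp := y k.+1; set G := g k.+1.
set phi := fun w => lfd fdelta G yp w + h w.
have a0 : 0 < a := apos k.
have A10 : 0 < A1 := A1pos k.
have Ak0 : 0 <= Ak := Apos k.
have eA1 : A1 = Ak + a := HA k.
have eLs : Ls k.+1 * a ^+ 2 = A1 by rewrite eA1 (proj1 (Halpha k)).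
set t := a / A1.
have et : 1 - t = Ak / A1 by rewrite /t eA1; field; lra.
(* first-order optimality *)
have [Qup Hopt] := Hu k.
have foc : dotp (gd uk) (z - up) - a * (phi z - phi up) <= dotp (gd up) (z - up).
  apply: (@dirder _ _ d) => // s /andP [s0 s1].
  have Qw : Q (s *: z + (1 - s) *: up) by apply: Qconv => //; rewrite (ltW s0) s1.
  have ew : s *: (z - up) + up = s *: z + (1 - s) *: up.
    by rewrite scalerBr scalerBl scale1r -addrA [- _ + _]addrC.
  have := Hopt _ Qw.
  have hc := hconv z up s Qz Qup ltac:(by rewrite (ltW s0) s1).
  rewrite /bregman lfd_comb ew.
  have e2 : s *: z + (1 - s) *: up - uk = s *: (z - up) + (up - uk).
    by rewrite -ew addrA addrAC.
  rewrite -/up -/uk -/a -/G -/yp e2 [dotp _ (s *: _ + _)]dotpDr dotpZr /phi => H.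
  rewrite ler_pdivlMl //.
  have : 0 <= a * (s * h z + (1 - s) * h up - h (s *: z + (1 - s) *: up)).
    by apply: mulr_ge0; [exact: ltW | rewrite subr_ge0].
  nra.
have three : a * phi up + bregman d gd up uk + bregman d gd z up <= a * phi z + bregman d gd z uk.
  have e3 : z - uk = (z - up) + (up - uk) by rewrite addrA subrK.
  rewrite /bregman e3 [dotp _ (z - up + (up - uk))]dotpDr; move: foc; lra.
have sc : 2^-1 * sqnorm (up - uk) <= bregman d gd up uk.
  have := dsc up uk Qup (Qu k); rewrite /bregman; lra.
have exy : x k.+1 - yp = t *: (up - uk).
  by rewrite Hx /yp Hy /t diffcomb.
rewrite exy sqnormZ xcomb -/t -/xk lfd_comb.
have hcx := hconv up xk t Qup (Qx k) (tin k).
rewrite -/t in hcx.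
rewrite et in hcx *.
have -> : Ls k.+1 / 2 * (t ^+ 2 * sqnorm (up - uk)) = A1^-1 * (2^-1 * sqnorm (up - uk)).
  rewrite /t -eLs; field; by rewrite !lt0r_neq0 // Lspos.
have -> : a / A1 * (lfd fdelta G yp z + h z + a^-1 * bregman d gd z uk - a^-1 * bregman d gd z up)
   = A1^-1 * (a * phi z + bregman d gd z uk - bregman d gd z up).
  rewrite /phi; field; lra.
have iA : 0 < A1^-1 by rewrite invr_gt0.
have key : 0 <= A1^-1 * (a * phi z + bregman d gd z uk - bregman d gd z up
                       - a * phi up - 2^-1 * sqnorm (up - uk)).
  apply: mulr_ge0; [exact: ltW | move: three sc; lra].
rewrite -/up; move: key hcx; rewrite /phi /t; nra.
Qed.
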